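(* Let $p=\xi_1+i\operatorname{Im}p$ be a smooth function on $T^\ast(\mathbb{R}^n)\smallsetminus0$. Assume that $\operatorname{Im}p$ strongly changes sign from $-$ to $+$ on $\gamma=[a,b]\times\{w\}$ and that $L_p(\gamma)\ge|\gamma|-\varrho$ for some $0<\varrho<|\gamma|/2$. If $\operatorname{Im}p$ does not depend on $\xi_1$, then for every $\kappa>\varrho$ the function $\operatorname{Im}p$ vanishes identically in a neighborhood of $I_\kappa\times\{w\}$, where $I_\kappa=[a+\kappa,b-\kappa]$.
   Context: Write points of $T^\ast(\mathbb{R}^n)$ as $(x_1,x',\xi_1,\xi')$. A bicharacteristic of $\operatorname{Re}p=\xi_1$ is $\gamma=[a,b]\times\{w_0\}=\{(t,x',0,\xi'):a\le t\le b\}$ with $w_0=(x',0,\xi')$; functions are written $g(t,w)$; $|\gamma|=b-a$. For $\gamma_j=[a_j,b_j]\times\{w_j\}$, $\gamma_j\dashrightarrow\gamma$ means $\liminf a_j\ge a$, $\limsup b_j\le b$, $w_j\to w_0$. $\operatorname{Im}p$ strongly changes sign from $-$ to $+$ on $[a,b]\times\{w_0\}$ if $\operatorname{Im}p(t,w_0)=0$ for $a\le t\le b$ and for every $\varepsilon>0$ there exist $a-\varepsilon<s_-<a$, $b<s_+<b+\varepsilon$ with $\operatorname{Im}p(s_-,w_0)<0<\operatorname{Im}p(s_+,w_0)$. When some sequence of such bicharacteristics $\gamma_j$ with this sign change satisfies $\gamma_j\dashrightarrow\gamma$, $L_p(\gamma)=\inf\liminf_j|\gamma_j|$ over all such sequences.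 *)

(* Defs.v *)
From HB Require Import structures.
From mathcomp Require Import all_boot all_order all_algebra.
From mathcomp Require Import all_classical all_reals all_analysis.
Set Implicit Arguments. Unset Strict Implicit. Unset Printing Implicit Defensive.
Import Order.TTheory GRing.Theory Num.Theory.
Import numFieldNormedType.Exports.
Local Open Scope classical_set_scope.
Local Open Scope ring_scope.

(* T^*(R^n) with n = m+1.  A point (x_1, x', xi_1, xi') is written (t, w)
   with t = x_1 and w = (x', xi_1, xi') : W m. *)
Definition W (R : realType) (m : nat) : Type :=
  ('rV[R]_m * R * 'rV[R]_m)%type.
Definition Pt (R : realType) (m : nat) : Type := (R * W R m)%type.

Definition w_x' R m (w : W R m) : 'rV[R]_m := w.1.1.
Definition w_xi1 R m (w : W R m) : R := w.1.2.
Definition w_xi' R m (w : W R m) : 'rV[R]_m := w.2.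

Definition cotangent_minus_zero (R : realType) (m : nat) : set (Pt R m) :=
  [set z | (w_xi1 z.2 != 0) \/ (w_xi' z.2 != 0)].

Fixpoint iterD (R : realType) (V : normedModType R) (vs : seq V)
    (f : V -> R) : V -> R :=
  match vs with
  | [::] => f
  | v :: vs' => fun x => 'D_v (iterD vs' f) x
  end.

Definition smooth_on (R : realType) (V : normedModType R) (U : set V)
    (f : V -> R) : Prop :=
  forall (vs : seq V) (x : V), U x ->
    (forall v : V, derivable (iterD vs f) x v) /\
    {for x, continuous (iterD vs f)}.

(* gamma = [a,b] x {w} is a bicharacteristic of Re p = xi_1 in T^*(R^n)\0 *)
Definition is_bichar (R : realType) (m : nat) (a b : R) (w : W R m) : Prop :=
  a <= b /\ w_xi1 w = 0 /\ w_xi' w != 0.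

Definition strongly_changes_sign (R : realType) (m : nat)
    (q : Pt R m -> R) (a b : R) (w : W R m) : Prop :=
  (forall t, a <= t <= b -> q (t, w) = 0) /\
  (forall eps : R, 0 < eps ->
     exists sm sp : R, [/\ a - eps < sm < a, b < sp < b + eps &
                          q (sm, w) < 0 < q (sp, w)]).

Definition bichar_conv (R : realType) (m : nat)
    (A B : nat -> R) (Ws : nat -> W R m) (a b : R) (w : W R m) : Prop :=
  [/\ (a%:E <= limn_einf (fun j => (A j)%:E))%E,
      (limn_esup (fun j => (B j)%:E) <= b%:E)%E &
      Ws @ \oo --> w].

Definition Lp (R : realType) (m : nat) (q : Pt R m -> R)
    (a b : R) (w : W R m) : \bar R :=
  ereal_inf [set l : \bar R | exists (A B : nat -> R) (Ws : nat -> W R m),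
     [/\ forall j, is_bichar (A j) (B j) (Ws j),
         forall j, strongly_changes_sign q (A j) (B j) (Ws j),
         bichar_conv A B Ws a b w &
         l = limn_einf (fun j => (B j - A j)%:E)]].

Definition indep_xi1 (R : realType) (m : nat) (q : Pt R m -> R) : Prop :=
  forall (t : R) (x' xi' : 'rV[R]_m) (s1 s2 : R),
    cotangent_minus_zero ((t, (x', s1, xi')) : Pt R m) ->
    cotangent_minus_zero ((t, (x', s2, xi')) : Pt R m) ->
    q (t, (x', s1, xi')) = q (t, (x', s2, xi')).

(* Main.v *)
Require Import Defs.
From HB Require Import structures.
From mathcomp Require Import all_boot all_order all_algebra.
From mathcomp Require Import all_classical all_reals all_analysis.
From mathcomp Require Import lra.
Import Order.TTheory GRing.Theory Num.Theory.
Import numFieldNormedType.Exports.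
Local Open Scope classical_set_scope.
Local Open Scope ring_scope.
Set Implicit Arguments. Unset Strict Implicit.
Section H.

Variable R : realType.

Lemma cont_ed (M : pseudoMetricType R) (f : M -> R) x (e : R) :
  {for x, continuous f} -> 0 < e ->
  exists2 d : R, 0 < d & forall y, ball x d y -> `|f x - f y| < e.
Proof.
move=> cf e0.
have H := @cvgr_dist_lt _ _ _ _ _ f (f x) cf e e0.
have := (nbhs_ballP x _).1 (H _).
move=> [d d0 Hd].
by exists d => // y /Hd.
Qed.

Lemma cont_neg (M : pseudoMetricType R) (f : M -> R) x :
  {for x, continuous f} -> f x < 0 ->
  exists2 d : R, 0 < d & forall y, ball x d y -> f y < 0.
Proof.
move=> cf fx; have fx' : 0 < - f x by rewrite oppr_gt0.
have [d d0 Hd] := cont_ed cf fx'.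
exists d => // y /Hd; rewrite ltr_norml => /andP[h1 h2]; lra.
Qed.

Lemma cont_pos (M : pseudoMetricType R) (f : M -> R) x :
  {for x, continuous f} -> 0 < f x ->
  exists2 d : R, 0 < d & forall y, ball x d y -> 0 < f y.
Proof.
move=> cf fx; have [d d0 Hd] := cont_ed cf fx.
exists d => // y /Hd; rewrite ltr_norml => /andP[h1 h2]; lra.
Qed.

Lemma ballR (x d y : R) : ball x d y <-> `|x - y| < d.
Proof. by rewrite -ball_normE. Qed.


Lemma ball_lt (x d y : R) : x - d < y -> y < x + d -> ball x d y.
Proof. by move=> h1 h2; rewrite ballR ltr_norml; apply/andP; split; lra. Qed.

Lemma sign_change (f : R -> R) (u v : R) : u <= v ->
  (forall x, u <= x <= v -> {for x, continuous f}) -> f u < 0 -> 0 < f v ->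
  exists sg ta : R, [/\ u < sg, sg <= ta, ta < v,
     (forall t, sg <= t <= ta -> f t = 0) &
     forall eps : R, 0 < eps -> exists sm sp : R,
        [/\ sg - eps < sm < sg, ta < sp < ta + eps & f sm < 0 < f sp]].
Proof.
move=> uv cf fu fv.
pose S := [set s | u <= s <= v /\ f s < 0].
have Su : S u by split => //; rewrite lexx uv.
have hS : has_sup S.
  by split; [exists u | exists v => s [/andP[_ ?] _]].
set sg := sup S.
have ubS := sup_upper_bound hS.
have usg : u <= sg := ubS _ Su.
have sgv : sg <= v.
  by apply: ge_sup; [exists u | move=> s [/andP[_ ?] _]].
have geq0 : forall s, sg < s <= v -> 0 <= f s.
  move=> s /andP[h1 h2]; rewrite leNgt; apply/negP => fs.
  have : s <= sg by apply: ubS; split => //; apply/andP; split => //; lra.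
  lra.
have cfx : forall x, u <= x <= v -> {for x, continuous f} := cf.
have fsg0 : f sg = 0.
  apply/eqP; rewrite eq_le; apply/andP; split.
  - rewrite leNgt; apply/negP => pos.
    have [d d0 Hd] := cont_pos (cf sg ltac:(apply/andP; split => //)) pos.
    have [e Se He] := sup_adherent d0 hS; rewrite -/sg in He.
    case: (Se) => _ fe.
    have esg : e <= sg := ubS _ Se.
    have : 0 < f e by apply: Hd; apply: ball_lt; lra.
    lra.
  - rewrite leNgt; apply/negP => neg.
    have [d d0 Hd] := cont_neg (cf sg ltac:(apply/andP; split => //)) neg.
    have [sgv'|vsg] := ltP sg v; last first.
      have ee : sg = v by apply/eqP; rewrite eq_le sgv vsg.
      rewrite ee in neg; lra.
    have [le|lt] := leP (sg + d/2) v.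
      have h1 := geq0 (sg + d/2) ltac:(apply/andP; split => //; lra).
      have : f (sg + d/2) < 0 by apply: Hd; apply: ball_lt; lra.
      lra.
    have : f v < 0 by apply: Hd; apply: ball_lt; lra.
    lra.
have usg' : u < sg.
  rewrite lt_neqAle usg andbT; apply/eqP => ee; rewrite ee in fu; lra.
have sgv' : sg < v.
  rewrite lt_neqAle sgv andbT; apply/eqP => ee; rewrite ee in fsg0; lra.
pose T := [set s | sg <= s <= v /\ 0 < f s].
have Tv : T v by split => //; rewrite lexx sgv.
have lT : has_lbound T by exists sg => s [/andP[? _] _].
have hT : has_inf T by split => //; exists v.
set ta := inf T.
have lbT := ge_inf lT.
have sgta : sg <= ta.
  by apply: lb_le_inf; [exists v | move=> s [/andP[? _] _]].
have tav : ta <= v := lbT _ Tv.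
have leq0 : forall s, sg <= s < ta -> f s <= 0.
  move=> s /andP[h1 h2]; rewrite leNgt; apply/negP => fs.
  have : ta <= s by apply: lbT; split => //; apply/andP; split => //; lra.
  lra.
have fta0 : f ta = 0.
  apply/eqP; rewrite eq_le; apply/andP; split.
  - rewrite leNgt; apply/negP => pos.
    have [d d0 Hd] := cont_pos (cf ta ltac:(apply/andP; split => //; lra)) pos.
    have sgta' : sg < ta.
      rewrite lt_neqAle sgta andbT; apply/eqP => ee; rewrite -ee in pos; lra.
    have [le|lt] := leP sg (ta - d/2).
      have h1 := leq0 (ta - d/2) ltac:(apply/andP; split => //; lra).
      have : 0 < f (ta - d/2) by apply: Hd; apply: ball_lt; lra.
      lra.
    have h1 := leq0 sg ltac:(apply/andP; split => //).
    have : 0 < f sg by apply: Hd; apply: ball_lt; lra.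
    lra.
  - rewrite leNgt; apply/negP => neg.
    have [d d0 Hd] := cont_neg (cf ta ltac:(apply/andP; split => //; lra)) neg.
    have [e Te He] := inf_adherent d0 hT; rewrite -/ta in He.
    case: (Te) => _ fe.
    have tae : ta <= e := lbT _ Te.
    have : f e < 0 by apply: Hd; apply: ball_lt; lra.
    lra.
have tav' : ta < v.
  rewrite lt_neqAle tav andbT; apply/eqP => ee; rewrite ee in fta0; lra.
exists sg, ta; split => //.
  move=> t /andP[h1 h2].
  have [tt|tt] := eqVneq t ta; first by rewrite tt.
  have tlt : t < ta by rewrite lt_neqAle tt h2.
  have h3 := leq0 t ltac:(apply/andP; split => //).
  have [ss|ss] := eqVneq t sg; first by rewrite ss.
  have slt : sg < t by rewrite lt_neqAle eq_sym ss h1.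
  have h4 := geq0 t ltac:(apply/andP; split => //; lra).
  lra.
move=> eps eps0.
have [e Se He] := sup_adherent eps0 hS; rewrite -/sg in He.
case: (Se) => _ fe.
have esg : e <= sg := ubS _ Se.
have [e' Te' He'] := inf_adherent eps0 hT; rewrite -/ta in He'.
case: (Te') => _ fe'.
have tae : ta <= e' := lbT _ Te'.
exists e, e'; split.
- apply/andP; split => //; rewrite lt_neqAle esg andbT; apply/eqP => ee.
  rewrite ee in fe; lra.
- apply/andP; split => //; rewrite lt_neqAle tae andbT; apply/eqP => ee.
  rewrite -ee in fe'; lra.
- by rewrite fe fe'.
Qed.

End H.
Section S2.
Variable R : realType.
Lemma cvg_hs (c : R) : (fun j => c + harmonic j) @ \oo --> c.
Proof. rewrite -[X in _ --> X](addr0 c); apply: cvgD; [exact: cvg_cst|exact: cvg_harmonic]. Qed.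
Lemma cvg_hsN (c : R) : (fun j => c - harmonic j) @ \oo --> c.
Proof. rewrite -[X in _ --> X](subr0 c); apply: cvgB; [exact: cvg_cst|exact: cvg_harmonic]. Qed.
Local Open Scope ereal_scope.
Lemma le_limn_einf (u v : (\bar R)^nat) : (forall n, u n <= v n) -> limn_einf u <= limn_einf v.
Proof.
move=> uv; rewrite !limn_einf_lim; apply: lee_lim; [exact: is_cvg_einfs|exact: is_cvg_einfs|].
apply: nearW => n; apply: le_ereal_inf_tmp => _ [k nk <-]; apply: le_trans (uv k).
by apply: ereal_inf_lbound; exists k.
Qed.
Lemma le_limn_esup (u v : (\bar R)^nat) : (forall n, u n <= v n) -> limn_esup u <= limn_esup v.
Proof.
move=> uv; rewrite !limn_esup_lim; apply: lee_lim; [exact: is_cvg_esups|exact: is_cvg_esups|].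
apply: nearW => n; apply: ge_ereal_sup => _ [k nk <-]; apply: le_trans (uv k) _.
by apply: ereal_sup_ubound; exists k.
Qed.
Lemma cvg_harm_shift (c : R) : (fun j => (c + harmonic j)%:E) @ \oo --> c%:E.
Proof.
apply: cvg_EFin; first by apply: nearW.
exact: cvg_hs.
Qed.
Lemma cvg_harm_shiftN (c : R) : (fun j => (c - harmonic j)%:E) @ \oo --> c%:E.
Proof.
apply: cvg_EFin; first by apply: nearW.
exact: cvg_hsN.
Qed.
Local Close Scope ereal_scope.
Lemma slice_cont m (q : Pt R m -> R) (s : R) (w : W R m) :
  {for (s, w), continuous q} -> {for s, continuous (fun s => q (s, w))}.
Proof.
move=> cq.
have h : (fun s' : R => ((s', w) : Pt R m)) @ s --> ((s, w) : Pt R m).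
  apply: (@cvg_pair _ _ _ _ (nbhs s) (nbhs w)); [exact: cvg_id | exact: cvg_cst].
exact: (continuous_comp h cq).
Qed.
End S2.

Unset Implicit Arguments.

Theorem proposition2p16 (R : realType) (m : nat) (q : Pt R m -> R)
    (a b : R) (w : W R m) (rho : R) :
  smooth_on (@cotangent_minus_zero R m) q ->
  is_bichar a b w ->
  strongly_changes_sign q a b w ->
  0 < rho -> rho < (b - a) / 2 ->
  ((b - a - rho)%:E <= Lp q a b w)%E ->
  indep_xi1 q ->
  forall kappa : R, rho < kappa ->
    exists U : set (Pt R m),
      [/\ open U,
          (forall t : R, a + kappa <= t <= b - kappa -> U (t, w)) &
          (forall z, U z -> q z = 0)].
Proof.
move=> sm bich scs rho0 rhob LpH indep kappa rk.
pose k' := (rho + kappa) / 2.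
have k'0 : 0 < k' by rewrite /k'; lra.
have rk' : rho < k' by rewrite /k'; lra.
have k'k : k' < kappa by rewrite /k'; lra.
case: bich => hab [w1 w2].
pose nxi := `|w_xi' w|.
have nxi0 : 0 < nxi by rewrite /nxi normr_gt0.
have cq : forall z : Pt R m, w_xi' z.2 != 0 -> {for z, continuous q}.
  by move=> z hz; exact: (sm [::] z (or_intror hz)).2.
have xi_ne0 : forall w' : W R m, ball w nxi w' -> w_xi' w' != 0.
  move=> w' [_ hb]; apply/negP => /eqP h0.
  move: hb; rewrite -ball_normE /ball_ /= => hb.
  rewrite /w_xi' in h0 nxi0; rewrite /nxi /w_xi' in hb.
  by rewrite h0 subr0 ltxx in hb.
have claim : exists2 d : R, 0 < d & forall (t : R) (w' : W R m),
    a + k' <= t <= b - k' -> ball w d w' -> w_xi1 w' = 0 -> q (t, w') = 0.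
  apply: contrapT => Hn.
  have Hn' : forall d : R, 0 < d -> exists t (w' : W R m),
      [/\ a + k' <= t <= b - k', ball w d w', w_xi1 w' = 0 & q (t, w') != 0].
    move=> d d0; apply: contrapT => H; apply: Hn; exists d => // t w' ht hb h1.
    apply/eqP; apply: contrapT => hq; apply: H; exists t, w'; split => //; try exact/negP.
  have step : forall j : nat, exists x : R * R * W R m,
      [/\ is_bichar x.1.1 x.1.2 x.2, strongly_changes_sign q x.1.1 x.1.2 x.2,
          a - harmonic j < x.1.1, x.1.2 < b + harmonic j &
          (x.1.2 - x.1.1 <= b - a - k' + harmonic j) /\ ball w (harmonic j) x.2].
    move=> j; set e := harmonic j; have e0 : 0 < e := harmonic_gt0 j.
    have [sm' [sp [/andP[sm1 sm2] /andP[sp1 sp2] /andP[qsm qsp]]]] := scs.2 e e0.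
    have [d1 d10 Hd1] := cont_neg (cq (sm', w) w2) qsm.
    have [d2 d20 Hd2] := cont_pos (cq (sp, w) w2) qsp.
    pose d := Num.min (Num.min d1 d2) (Num.min e nxi).
    have d0 : 0 < d by rewrite /d !lt_min d10 d20 e0 nxi0.
    have [t [w' [/andP[ht1 ht2] hb hx1 hq]]] := Hn' d d0.
    have hb1 : ball w d1 w' by apply: le_ball hb; rewrite /d !ge_min lexx.
    have hb2 : ball w d2 w' by apply: le_ball hb; rewrite /d !ge_min lexx ?orbT.
    have hbe : ball w e w' by apply: le_ball hb; rewrite /d !ge_min lexx ?orbT.
    have hbn : ball w nxi w' by apply: le_ball hb; rewrite /d !ge_min lexx ?orbT.
    have xw' := xi_ne0 _ hbn.
    have qsm' : q (sm', w') < 0 by apply: Hd1; split => //; exact: ballxx.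
    have qsp' : 0 < q (sp, w') by apply: Hd2; split => //; exact: ballxx.
    pose g := fun s => q (s, w').
    have cg : forall x, {for x, continuous g}.
      by move=> x; apply: slice_cont; apply: cq.
    have [neg|pos] : q (t, w') < 0 \/ 0 < q (t, w').
      by move: hq; rewrite neq_lt => /orP.
    - have [sg [ta [h1 h2 h3 h4 h5]]] := @sign_change R g t sp
        ltac:(lra) (fun x _ => cg x) neg qsp'.
      exists (sg, ta, w'); split => //=.
      + lra.
      + lra.
      + split => //; lra.
    - have [sg [ta [h1 h2 h3 h4 h5]]] := @sign_change R g sm' t
        ltac:(lra) (fun x _ => cg x) qsm' pos.
      exists (sg, ta, w'); split => //=.
      + lra.
      + lra.
      + split => //; lra.
  have [F HF] := choice step.
  pose A := fun j => (F j).1.1.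
  pose B := fun j => (F j).1.2.
  pose Ws := fun j => (F j).2.
  have Hconv : bichar_conv A B Ws a b w.
    split.
    - rewrite -(cvg_limn_einf_sup (@cvg_harm_shiftN _ a)).1.
      apply: le_limn_einf => j; rewrite lee_fin; have [_ _ h _ _] := HF j.
      by rewrite ltW.
    - rewrite -(cvg_limn_einf_sup (@cvg_harm_shift _ b)).2.
      apply: le_limn_esup => j; rewrite lee_fin; have [_ _ _ h _] := HF j.
      by rewrite ltW.
    - apply/cvg_ballP => eps eps0.
      have := @cvgr_dist_lt _ _ _ _ _ _ _ (@cvg_harmonic R) eps eps0.
      move=> /(_ _); apply: filterS => j hj.
      have [_ _ _ _ [_ hb]] := HF j.
      apply: le_ball hb.
      move: hj; rewrite sub0r normrN ger0_norm ?harmonic_ge0 //; exact: ltW.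
  have HL : (Lp q a b w <= limn_einf (fun j => (B j - A j)%:E))%E.
    apply: ereal_inf_lbound; exists A, B, Ws; split => //.
    - by move=> j; have [] := HF j.
    - by move=> j; have [] := HF j.
  have HS : (limn_einf (fun j => (B j - A j)%:E) <= (b - a - k')%:E)%E.
    apply: le_trans (limn_einf_sup _) _.
    rewrite -(cvg_limn_einf_sup (@cvg_harm_shift _ (b - a - k'))).2.
    apply: le_limn_esup => j; rewrite lee_fin.
    by have [_ _ _ _ [h _]] := HF j.
  have := le_trans LpH (le_trans HL HS); rewrite lee_fin; lra.
have [d d0 Hd] := claim.
pose c := (a + b) / 2.
pose r := (b - a) / 2 - k'.
pose U := (fst @^-1` ball c r) `&` (snd @^-1` ball w d)
          `&` ((fun z : Pt R m => z.2.2) @^-1` ball (w_xi' w) nxi).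
exists U; split.
- apply: openI; [apply: openI|].
  + by apply: open_comp; [move=> z _; exact: cvg_fst | exact: ball_open].
  + by apply: open_comp; [move=> z _; exact: cvg_snd | exact: ball_open].
  + apply: open_comp; last exact: ball_open.
    move=> z _; apply: continuous_comp; [exact: cvg_snd | exact: cvg_snd].
- move=> t /andP[ht1 ht2]; split; [split|] => /=.
  + apply: ball_lt; rewrite /c /r; lra.
  + exact: ballxx.
  + exact: ballxx.
- move=> [t [[x' s1] xi']] [[/= hc hw] hn].
  have hxi : xi' != 0.
    apply/negP => /eqP h0; move: hn; rewrite h0 -ball_normE /ball_ /= subr0.
    by rewrite /nxi ltxx.
  have e1 : q (t, (x', s1, xi')) = q (t, (x', 0, xi')).
    by apply: indep; right.
  rewrite e1; apply: Hd => //.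
  - move: hc; rewrite ballR ltr_norml /c /r => /andP[h1 h2].
    apply/andP; split; lra.
  - case: hw => [[h1 h2] h3]; split; [split|] => //=.
    have ww : w.1.2 = 0 := w1.
    rewrite ww; exact: ballxx.
Qed.
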